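(* Let $\lambda>0$, $\beta\ge\alpha>1$ and $\gamma\ge\alpha/\beta$. Then $$\sum_{i\in\mathbb{N}}\frac{i^{-\alpha}}{(i^{-\beta}+\lambda)^\gamma}\le\lambda^{-\frac{1+\beta\gamma-\alpha}{\beta}}\,2^{1-\frac{\alpha}{\beta}}\int_0^\infty\frac{1}{1+y^\alpha}\,dy.$$ *)

(* Defs.v *)
From Stdlib Require Import Reals.
From Coquelicot Require Import Coquelicot.
Open Scope R_scope.

Definition lemma3_term (alpha beta gamma lambda x : R) : R :=
  Rpower x (- alpha) / Rpower (Rpower x (- beta) + lambda) gamma.

Definition lemma3_integrand (alpha y : R) : R := / (1 + Rpower y alpha).

(* Main.v *)
Require Import Defs.
From Stdlib Require Import Reals Lra Lia Classical.
From Coquelicot Require Import Coquelicot.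
Open Scope R_scope.

Lemma bern (p L : R) : 0 <= p <= 1 -> exp (p * L) <= 1 + p * (exp L - 1).
Proof.
  intros Hp.
  pose proof (exp_ineq1_le ((1-p)*L)) as h1.
  pose proof (exp_ineq1_le (-p*L)) as h2.
  assert (e1 : exp ((1-p)*L) * exp (p*L) = exp L) by (rewrite <- exp_plus; f_equal; ring).
  assert (e2 : exp (-p*L) * exp (p*L) = 1) by (rewrite <- exp_plus, <- exp_0; f_equal; ring).
  pose proof (exp_pos (p*L)) as hp.
  assert (H : 1 <= p * exp ((1-p)*L) + (1-p) * exp (-p*L)) by nra.
  nra.
Qed.

Lemma pm (p A B : R) : 0 < p <= 1 -> 0 < A -> 0 < B ->
  exp (p * ln A) + exp (p * ln B) <= exp ((1-p) * ln 2 + p * ln (A+B)).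
Proof.
  intros Hp HA HB.
  set (S := A + B).
  assert (HS : 0 < S) by (unfold S; lra).
  pose proof (bern p (ln 2 + ln A - ln S) ltac:(lra)) as b1.
  pose proof (bern p (ln 2 + ln B - ln S) ltac:(lra)) as b2.
  set (E := exp (p * ln 2 - p * ln S)).
  assert (HE : 0 < E) by apply exp_pos.
  assert (k1 : exp (ln 2 + ln A - ln S) = 2 * A / S).
  { unfold Rminus; rewrite !exp_plus, exp_Ropp, !exp_ln by lra. field; lra. }
  assert (k2 : exp (ln 2 + ln B - ln S) = 2 * B / S).
  { unfold Rminus; rewrite !exp_plus, exp_Ropp, !exp_ln by lra. field; lra. }
  assert (j1 : exp (p * (ln 2 + ln A - ln S)) = E * exp (p * ln A)).
  { unfold E; rewrite <- exp_plus; f_equal; ring. }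
  assert (j2 : exp (p * (ln 2 + ln B - ln S)) = E * exp (p * ln B)).
  { unfold E; rewrite <- exp_plus; f_equal; ring. }
  rewrite k1, j1 in b1. rewrite k2, j2 in b2.
  assert (sum2 : E * (exp (p * ln A) + exp (p * ln B)) <= 2).
  { assert (p * (2 * A / S - 1) + p * (2 * B / S - 1) = 0) by (unfold S; field; lra).
    lra. }
  assert (r : exp ((1-p) * ln 2 + p * ln S) * E = 2).
  { unfold E; rewrite <- exp_plus. transitivity (exp (ln 2)); [f_equal; ring | apply exp_ln; lra]. }
  fold S.
  set (X := exp (p * ln A) + exp (p * ln B)) in *.
  set (Y := exp ((1-p) * ln 2 + p * ln S)) in *.
  apply Rmult_le_reg_r with E; auto. nra.
Qed.

Lemma pointwise (lambda alpha beta gamma x : R)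
  (Hl : 0 < lambda) (Hab : alpha <= beta) (Ha : 1 < alpha)
  (Hg : alpha / beta <= gamma) (Hx : 0 < x) :
  lemma3_term alpha beta gamma lambda x <=
  (Rpower lambda (- ((1 + beta * gamma - alpha) / beta)) * Rpower 2 (1 - alpha / beta)
     * Rpower lambda (1/beta)) * lemma3_integrand alpha (Rpower lambda (1/beta) * x).
Proof.
  unfold lemma3_term, lemma3_integrand, Rpower.
  assert (Hb : 0 < beta) by lra.
  set (p := alpha / beta).
  assert (Hp : 0 < p <= 1).
  { unfold p; split. apply Rdiv_lt_0_compat; lra.
    apply Rmult_le_reg_r with beta; auto. unfold Rdiv; rewrite Rmult_assoc, Rinv_l; lra. }
  assert (Hpb : p * beta = alpha) by (unfold p; field; lra).
  set (X := ln x). set (Ll := ln lambda).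
  set (u := exp (- beta * X) + lambda).
  assert (Hu : 0 < u) by (unfold u; pose proof (exp_pos (-beta*X)); lra).
  set (lu := ln u).
  assert (Hlu : Ll <= lu) by (apply ln_le; auto; unfold u; pose proof (exp_pos (-beta*X)); lra).
  assert (Hcx : ln (exp (1 / beta * Ll) * x) = Ll / beta + X).
  { rewrite ln_mult, ln_exp; [unfold X; field; lra | apply exp_pos | auto]. }
  rewrite Hcx.
  set (B := exp (Ll + beta * X)).
  assert (HB : 0 < B) by apply exp_pos.
  assert (Hub : u * exp (beta * X) = 1 + B).
  { unfold u, B. rewrite Rmult_plus_distr_r, <- exp_plus, (exp_plus Ll).
    unfold Ll; rewrite (exp_ln lambda) by auto.
    replace (-beta * X + beta * X) with 0 by ring. rewrite exp_0; ring. }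
  assert (Hl1B : ln (1 + B) = lu + beta * X).
  { rewrite <- Hub, ln_mult, ln_exp; auto; apply exp_pos. }
  pose proof (pm p 1 B Hp ltac:(lra) HB) as P.
  rewrite ln_1, Rmult_0_r, exp_0, Hl1B in P. unfold B in P. rewrite ln_exp in P.
  replace (p * (Ll + beta * X)) with (alpha * (Ll / beta + X)) in P by (rewrite <- Hpb; field; lra).
  set (D := 1 + exp (alpha * (Ll / beta + X))) in *.
  assert (HD : 0 < D) by (unfold D; pose proof (exp_pos (alpha * (Ll / beta + X))); lra).
  rewrite <- !exp_plus.
  set (K := - ((1 + beta * gamma - alpha) / beta) * Ll + (1 - p) * ln 2 + 1 / beta * Ll).
  assert (HK : K = (p - gamma) * Ll + (1 - p) * ln 2) by (unfold K, p; field; lra).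
  fold lu.
  apply Rmult_le_reg_r with (exp (gamma * lu) * D).
  { apply Rmult_lt_0_compat; auto; apply exp_pos. }
  replace (exp (- alpha * X) / exp (gamma * lu) * (exp (gamma * lu) * D))
    with (exp (- alpha * X) * D) by (pose proof (exp_pos (gamma*lu)); field; repeat split; lra).
  replace (exp K * / D * (exp (gamma * lu) * D)) with (exp K * exp (gamma * lu))
    by (field; repeat split; lra).
  rewrite <- exp_plus.
  apply Rle_trans with (exp (- alpha * X) * exp ((1 - p) * ln 2 + p * (lu + beta * X))).
  { apply Rmult_le_compat_l; [left; apply exp_pos | auto]. }
  rewrite <- exp_plus.
  destruct (Rle_lt_or_eq_dec _ _ (Rmult_le_pos (gamma - p) (lu - Ll) ltac:(unfold p; lra) ltac:(lra))) as [H|H].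
  - left. apply exp_increasing. rewrite HK. rewrite <- Hpb.
    assert (E : (p - gamma) * Ll + gamma * lu - p * lu = (gamma - p) * (lu - Ll)) by ring.
    clearbody p lu Ll X. clear - H E. nra.
  - right. f_equal. rewrite HK. rewrite <- Hpb.
    assert (E : (p - gamma) * Ll + gamma * lu - p * lu = (gamma - p) * (lu - Ll)) by ring.
    clearbody p lu Ll X. clear - H E. nra.
Qed.

Section H.
Variable alpha : R.
Hypothesis Ha : 1 < alpha.
Let h := lemma3_integrand alpha.

Lemma h_cont y : 0 < y -> continuous h y.
Proof.
  intros Hy. unfold h, lemma3_integrand, Rpower.
  apply (ex_derive_continuous (K:=R_AbsRing) (V:=R_NormedModule)). auto_derive.
  pose proof (exp_pos (alpha * ln y)). repeat split; auto; lra.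
Qed.

Lemma h_pos y : 0 < y -> 0 < h y.
Proof.
  intros Hy. unfold h, lemma3_integrand, Rpower.
  pose proof (exp_pos (alpha * ln y)). apply Rinv_0_lt_compat; lra.
Qed.

Lemma h_decr x y : 0 < x -> x <= y -> h y <= h x.
Proof.
  intros Hx Hxy. unfold h, lemma3_integrand, Rpower.
  pose proof (exp_pos (alpha * ln x)).
  apply Rinv_le_contravar. lra.
  apply Rplus_le_compat_l.
  assert (alpha * ln x <= alpha * ln y).
  { apply Rmult_le_compat_l. lra. apply ln_le; auto. }
  destruct H0 as [H0|H0]. left; apply exp_increasing; auto. rewrite H0; lra.
Qed.

Lemma h_le_pow y : 0 < y -> h y <= exp (- alpha * ln y).
Proof.
  intros Hy. unfold h, lemma3_integrand, Rpower.
  pose proof (exp_pos (alpha * ln y)).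
  replace (- alpha * ln y) with (- (alpha * ln y)) by ring. rewrite exp_Ropp.
  apply Rinv_le_contravar; lra.
Qed.

Lemma ex_h a b : 0 < a -> 0 < b -> ex_RInt h a b.
Proof.
  intros Ha' Hb. apply (ex_RInt_continuous (V:=R_CompleteNormedModule)). intros z Hz. apply h_cont.
  assert (0 < Rmin a b) by (apply Rmin_glb_lt; auto). lra.
Qed.

Lemma F_mono a' a b b' : 0 < a' -> a' <= a -> a <= b -> b <= b' ->
  RInt h a b <= RInt h a' b'.
Proof.
  intros H1 H2 H3 H4.
  rewrite <- (RInt_Chasles h a' a b'); try (apply ex_h; lra).
  rewrite <- (RInt_Chasles h a b b'); try (apply ex_h; lra).
  assert (0 <= RInt h a' a).
  { apply RInt_ge_0; auto. apply ex_h; lra. intros; left; apply h_pos; lra. }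
  assert (0 <= RInt h b b').
  { apply RInt_ge_0; auto. apply ex_h; lra. intros; left; apply h_pos; lra. }
  unfold plus; simpl. lra.
Qed.

Lemma G_derive y : 0 < y ->
  is_derive (fun y => exp ((1 - alpha) * ln y) / (1 - alpha)) y (exp (- alpha * ln y)).
Proof.
  intros Hy. auto_derive. auto.
  assert (E : exp ((1 - alpha) * ln y) = exp (- alpha * ln y) * y).
  { rewrite <- (exp_ln y) at 3 by auto. rewrite <- exp_plus. f_equal. ring. }
  rewrite E. field. split; lra.
Qed.

Lemma F_bound a b : 0 < a -> a <= b -> RInt h a b <= 1 + 1 / (alpha - 1).
Proof.
  intros H1 H2.
  set (a' := Rmin a 1). set (b' := Rmax b 1).
  assert (Ha1 : 0 < a' <= 1) by (unfold a'; split; [apply Rmin_glb_lt; lra | apply Rmin_r]).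
  assert (Hb1 : 1 <= b') by (unfold b'; apply Rmax_r).
  apply Rle_trans with (RInt h a' b').
  { apply F_mono; unfold a', b'; auto. apply Rmin_glb_lt; lra. apply Rmin_l. apply Rmax_l. }
  rewrite <- (RInt_Chasles h a' 1 b'); try (apply ex_h; lra).
  unfold plus; simpl.
  assert (I1 : RInt h a' 1 <= 1).
  { apply Rle_trans with (RInt (fun _ => 1) a' 1).
    apply RInt_le; try lra. apply ex_h; lra. apply ex_RInt_const.
    intros x Hx. left. unfold h, lemma3_integrand. pose proof (exp_pos (alpha * ln x)).
    unfold Rpower. rewrite <- Rinv_1. apply Rinv_lt_contravar; lra.
    rewrite RInt_const. unfold scal; simpl; unfold mult; simpl. lra. }
  assert (I2 : RInt h 1 b' <= 1 / (alpha - 1)).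
  { assert (D : is_RInt (fun y => exp (- alpha * ln y)) 1 b'
       (minus (exp ((1 - alpha) * ln b') / (1 - alpha)) (exp ((1 - alpha) * ln 1) / (1 - alpha)))).
    { apply (is_RInt_derive (fun y => exp ((1 - alpha) * ln y) / (1 - alpha))).
      intros x Hx. rewrite Rmin_left in Hx by lra. apply G_derive. lra.
      intros x Hx. rewrite Rmin_left in Hx by lra.
      apply (ex_derive_continuous (K:=R_AbsRing) (V:=R_NormedModule)). auto_derive. lra. }
    apply Rle_trans with (RInt (fun y => exp (- alpha * ln y)) 1 b').
    apply RInt_le; try lra. apply ex_h; lra. eexists; eauto.
    intros x Hx. apply h_le_pow. lra.
    rewrite (is_RInt_unique _ _ _ _ D). rewrite ln_1, Rmult_0_r, exp_0.
    unfold minus, plus, opp; simpl.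
    pose proof (exp_pos ((1 - alpha) * ln b')).
    apply Rmult_le_reg_r with (alpha - 1). lra.
    replace ((exp ((1 - alpha) * ln b') / (1 - alpha) + - (1 / (1 - alpha))) * (alpha - 1))
      with (1 - exp ((1 - alpha) * ln b')) by (field; lra).
    replace (1 / (alpha - 1) * (alpha - 1)) with 1 by (field; lra). lra. }
  lra.
Qed.

End H.

Lemma I_exists alpha : 1 < alpha -> exists I,
  is_RInt_gen (lemma3_integrand alpha) (at_right 0) (Rbar_locally p_infty) I /\
  forall a b, 0 < a -> a <= b -> RInt (lemma3_integrand alpha) a b <= I.
Proof.
  intros Ha.
  set (h := lemma3_integrand alpha).
  set (E := fun z => exists a b, 0 < a /\ a <= b /\ z = RInt h a b).
  assert (Eb : bound E).
  { exists (1 + 1 / (alpha - 1)). intros z [a [b [H1 [H2 ->]]]]. apply F_bound; auto. }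
  assert (Ene : exists z, E z) by (exists (RInt h 1 1), 1, 1; repeat split; lra).
  destruct (completeness E Eb Ene) as [I [Iub Ilub]].
  exists I. split.
  2:{ intros a b H1 H2. apply Iub. exists a, b; auto. }
  unfold is_RInt_gen, filterlimi, filter_le, filtermapi.
  intros P [eps HP].
  destruct (classic (exists z, E z /\ I - eps < z)) as [[z [[a0 [b0 [H1 [H2 ->]]]] Hz]] | Hn].
  2:{ exfalso. assert (is_upper_bound E (I - eps)).
      { intros z Hz. destruct (Rle_or_lt z (I - eps)); auto. exfalso; apply Hn; exists z; auto. }
      pose proof (Ilub _ H). destruct eps; simpl in *; lra. }
  apply Filter_prod with (fun a => 0 < a <= a0) (fun b => b0 <= b).
  - unfold at_right, within, locally. exists (mkposreal a0 H1). intros y Hy Hpos.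
    revert Hy. unfold ball; simpl; unfold AbsRing_ball, abs, minus, plus, opp; simpl.
    intros Hy. rewrite Rplus_opp_r_uniq with 0 0 in Hy by ring. split; auto.
    apply Rabs_lt_between in Hy. lra.
  - exists b0. intros; lra.
  - intros a b [Ha1 Ha2] Hb. simpl. exists (RInt h a b). split.
    + apply (RInt_correct (V:=R_CompleteNormedModule)), ex_h; lra.
    + apply HP. unfold ball; simpl; unfold AbsRing_ball, abs, minus, plus, opp; simpl.
      assert (RInt h a b <= I) by (apply Iub; exists a, b; repeat split; lra).
      assert (RInt h a0 b0 <= RInt h a b) by (apply F_mono; lra).
      apply Rabs_lt_between; lra.
Qed.

Lemma sum_le_int (g : R -> R) (t : R) :
  0 < t < 1 ->
  (forall x y, 0 < x -> x <= y -> g y <= g x) ->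
  (forall x, 0 < x -> 0 <= g x) ->
  (forall a b, 0 < a -> a <= b -> ex_RInt g a b) ->
  forall N, (1 - t) * sum_n (fun n => g (INR (S n))) N <= RInt g t (INR (S N)).
Proof.
  intros Ht Hdec Hpos Hex.
  assert (Hc : forall a b c, a <= b -> ex_RInt g a b -> (forall x, a < x < b -> c <= g x) ->
     (b - a) * c <= RInt g a b).
  { intros a b c Hab He Hx.
    apply Rle_trans with (RInt (fun _ => c) a b).
    rewrite RInt_const. unfold scal; simpl; unfold mult; simpl. lra.
    apply RInt_le; auto. apply ex_RInt_const. }
  induction N.
  - rewrite sum_O. simpl. replace (INR 1) with 1 by (simpl; ring).
    apply Hc. lra. apply Hex; lra. intros x Hx. apply Hdec; lra.
  - rewrite sum_Sn. change (plus ?x ?y) with (x + y).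
    assert (HN : 0 <= INR N) by apply pos_INR.
    rewrite <- (RInt_Chasles g t (INR (S N)) (INR (S (S N)))).
    2,3: apply Hex; rewrite ?S_INR; lra.
    change (plus ?x ?y) with (x + y).
    assert (g (INR (S (S N))) <= RInt g (INR (S N)) (INR (S (S N)))).
    { replace (g (INR (S (S N)))) with ((INR (S (S N)) - INR (S N)) * g (INR (S (S N)))).
      apply Hc. rewrite !S_INR; lra. apply Hex; rewrite ?S_INR; lra.
      intros x Hx. apply Hdec. rewrite S_INR in Hx; lra. lra.
      rewrite (S_INR (S N)). ring. }
    assert (0 <= g (INR (S (S N)))) by (apply Hpos; rewrite !S_INR; lra).
    nra.
Qed.

Theorem lemma3 (lambda alpha beta gamma : R)
  (Hl : 0 < lambda) (Hab : alpha <= beta) (Ha : 1 < alpha)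
  (Hg : alpha / beta <= gamma) :
  exists I : R,
    is_RInt_gen (lemma3_integrand alpha) (at_right 0) (Rbar_locally p_infty) I /\
    exists s : R,
      is_series (fun n : nat => lemma3_term alpha beta gamma lambda (INR (S n))) s /\
      s <= Rpower lambda (- ((1 + beta * gamma - alpha) / beta))
           * Rpower 2 (1 - alpha / beta) * I.
Proof.
  destruct (I_exists alpha Ha) as [I [HI HIb]].
  exists I. split; auto.
  set (h := lemma3_integrand alpha) in *.
  set (B0 := Rpower lambda (- ((1 + beta * gamma - alpha) / beta)) * Rpower 2 (1 - alpha / beta)).
  set (c := Rpower lambda (1 / beta)).
  assert (HB0 : 0 < B0).
  { unfold B0, Rpower. apply Rmult_lt_0_compat; apply exp_pos. }
  assert (Hc : 0 < c) by (unfold c, Rpower; apply exp_pos).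
  set (g := fun x => (B0 * c) * h (c * x)).
  set (f := fun n : nat => lemma3_term alpha beta gamma lambda (INR (S n))).
  assert (Hfg : forall x, 0 < x -> lemma3_term alpha beta gamma lambda x <= g x).
  { intros x Hx. unfold g, h, B0, c. apply pointwise; auto. }
  assert (Hgint : forall a b, 0 < a -> a <= b -> is_RInt g a b (B0 * RInt h (c * a) (c * b))).
  { intros a b Ha0 Hab0.
    assert (H1 : is_RInt h (c * a + 0) (c * b + 0) (RInt h (c * a) (c * b))).
    { rewrite !Rplus_0_r. apply (RInt_correct (V:=R_CompleteNormedModule)).
      apply ex_h; auto; apply Rmult_lt_0_compat; lra. }
    apply is_RInt_comp_lin in H1.
    apply (is_RInt_scal _ _ _ B0) in H1.
    eapply is_RInt_ext; [|exact H1].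
    intros x _. unfold g, scal; simpl; unfold mult; simpl. rewrite Rplus_0_r. ring. }
  assert (Hsum : forall N, sum_n f N <= B0 * I).
  { intros N.
    assert (Hfpos : forall n, 0 <= f n).
    { intros n. unfold f, lemma3_term, Rpower. left. apply Rdiv_lt_0_compat; apply exp_pos. }
    assert (HS0 : 0 <= sum_n f N).
    { induction N. rewrite sum_O; auto. rewrite sum_Sn. change (plus ?x ?y) with (x + y).
      pose proof (Hfpos (S N)); lra. }
    assert (Hfg_sum : forall M, sum_n f M <= sum_n (fun n => g (INR (S n))) M).
    { induction M. rewrite !sum_O. unfold f; apply Hfg. apply lt_0_INR; lia.
      rewrite !sum_Sn. change (plus ?x ?y) with (x + y).
      assert (f (S M) <= g (INR (S (S M)))) by (unfold f; apply Hfg; apply lt_0_INR; lia).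
      lra. }
    assert (Ht : forall t, 0 < t < 1 -> (1 - t) * sum_n f N <= B0 * I).
    { intros t Ht.
      pose proof (sum_le_int g t Ht) as SL.
      assert (Hpn : 0 < INR (S N)) by (apply lt_0_INR; lia).
      specialize (SL ltac:(intros x y Hx Hxy; unfold g;
                            apply Rmult_le_compat_l; [nra | apply h_decr; [lra | nra | nra]])).
      specialize (SL ltac:(intros x Hx; unfold g; pose proof (h_pos alpha (c * x) ltac:(nra)); unfold h; left; apply Rmult_lt_0_compat; [nra | assumption])).
      specialize (SL ltac:(intros a b Ha0 Hab0; eexists; apply Hgint; auto) N).
      rewrite (is_RInt_unique _ _ _ _ (Hgint t (INR (S N)) ltac:(lra) ltac:(pose proof (pos_INR N); rewrite S_INR; lra))) in SL.
      assert (RInt h (c * t) (c * INR (S N)) <= I).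
      { apply HIb. nra. pose proof (pos_INR N); rewrite S_INR in *; nra. }
      pose proof (Hfg_sum N). nra. }
    destruct (Rle_or_lt (sum_n f N) (B0 * I)) as [H|H]; auto. exfalso.
    set (S := sum_n f N) in *. set (Bd := B0 * I) in *.
    set (d := S - Bd).
    assert (Hd : 0 < d) by (unfold d; lra).
    set (t := d / (2 * (d + S))).
    assert (Ht01 : 0 < t < 1).
    { unfold t; split. apply Rdiv_lt_0_compat; lra.
      apply Rmult_lt_reg_r with (2 * (d + S)). lra.
      unfold Rdiv; rewrite Rmult_assoc, Rinv_l; lra. }
    pose proof (Ht t ltac:(lra)) as Hc1.
    assert (tS : t * S < d).
    { unfold t. unfold Rdiv. rewrite Rmult_comm, <- Rmult_assoc.
      apply Rmult_lt_reg_r with (2 * (d + S)). lra.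
      rewrite Rmult_assoc, Rinv_l by lra. nra. }
    unfold d in tS. nra. }
  assert (Hinc : forall n, sum_n f n <= sum_n f (S n)).
  { intros n. rewrite sum_Sn. change (plus ?x ?y) with (x + y).
    assert (0 <= f (S n)) by (unfold f, lemma3_term, Rpower; left; apply Rdiv_lt_0_compat; apply exp_pos).
    lra. }
  destruct (ex_finite_lim_seq_incr _ _ Hinc Hsum) as [s Hs].
  exists s. split.
  - exact Hs.
  - pose proof (is_lim_seq_le _ _ _ _ Hsum Hs (is_lim_seq_const (B0 * I))) as L.
    simpl in L. unfold B0 in L. exact L.
Qed.
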